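(* Fix a constant $c\ge 10$. Consider the random pairwise load balancing process on $n\ge2$ nodes, where tokens are moved in skip mode. Let $t$ be a time step and condition on any history up to time $t$ for which $t\ge T_1$. Let $b$ be a token whose normalized height satisfies $\hat h_b(t)>2c$. Then, conditionally on this history, with probability at least $1/n$ we have $\hat h_b(t+1)\le \frac{17}{20}\,\hat h_b(t)$.
   Context: Random pairwise load balancing process: $n$ nodes, $m$ tokens, load vector $\ell(t)\in\mathbb{Z}^n$. In each time step $t$, independently, an ordered pair $(u,v)$ of distinct nodes is chosen uniformly at random and loads become $\ell_u(t+1)=\lceil(\ell_u(t)+\ell_v(t))/2\rceil$, $\ell_v(t+1)=\lfloor(\ell_u(t)+\ell_v(t))/2\rfloor$. Average load $\varnothing=m/n$, $\mathrm{round}(\varnothing)$ is $\varnothing$ rounded to the nearest integer, and $\Phi(\ell)=\sum_i(\ell_i-\varnothing)^2$. $T_1$ is the first time $t$ with $\Phi(\ell(t))<n$. For the analysis, tokens on each node are kept in a linear (stack) order; the height $h_b(t)$ of token $b$ is the number of tokens preceding (below) $b$ on its node, and the normalized height is $\hat h_b(t)=h_b(t)-\mathrm{round}(\varnothing)$. Skip mode: when $k$ tokens must move from the node with larger load to the node with smaller load, the moved tokens are chosen starting from the topmost token of the larger node and taking every second token downward (top, third from top, fifth from top, …) until $k$ tokens are selected; these are then placed on top of the receiving node in their original relative order, and the remaining tokens of the larger node keep their relative order. *)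

(* Defs.v *)
From HB Require Import structures.
From mathcomp Require Import all_boot all_order all_algebra.
Set Implicit Arguments. Unset Strict Implicit. Unset Printing Implicit Defensive.
Import Order.TTheory GRing.Theory Num.Theory.

(* A configuration of the process on n nodes: each node carries a stack of
   tokens (tokens are named by natural numbers), listed from BOTTOM to TOP. *)
Definition config (n : nat) := 'I_n -> seq nat.

Section Defs.
Variable n : nat.
Implicit Types (cfg : config n).

Definition load cfg (i : 'I_n) : nat := size (cfg i).

Definition ntokens cfg : nat := \sum_(i < n) load cfg i.

Definition avg cfg : rat := (ntokens cfg)%:R / n%:R.

Definition Phi cfg : rat := \sum_(i < n) ((load cfg i)%:R - avg cfg) ^+ 2.

(* round(avg): m/n rounded to the nearest integer (ties rounded up),
   i.e. floor(m/n + 1/2) = floor((2m + n) / (2n)). *)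
Definition round_avg cfg : nat := ((ntokens cfg).*2 + n) %/ (n.*2).

(* height of token b: number of tokens below b on its node (0 if absent) *)
Definition height cfg (b : nat) : nat :=
  match [pick i | b \in cfg i] with
  | Some i => index b (cfg i)
  | None => 0
  end.

Definition nheight cfg (b : nat) : rat :=
  (height cfg b)%:R - (round_avg cfg)%:R.

End Defs.

(* Skip mode selection: in a stack s of size L (bottom-to-top), the k moved
   tokens are the top one, the third from top, the fifth from top, ...;
   position i (from bottom) is selected iff L-1-i is even and L-1-i < 2k. *)
Definition skip_sel (L k : nat) : bitseq :=
  mkseq (fun i => odd (L - i) && (L - i <= k.*2)) L.

Definition moved (s : seq nat) (k : nat) : seq nat :=
  mask (skip_sel (size s) k) s.

Definition kept (s : seq nat) (k : nat) : seq nat :=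
  mask (map negb (skip_sel (size s) k)) s.

(* One step of the process with the chosen ordered pair (u, v), u != v:
   l_u' = ceil((l_u+l_v)/2), l_v' = floor((l_u+l_v)/2), tokens moved from
   the larger node to the smaller in skip mode, placed on top of the
   receiving stack in their original relative order. *)
Definition step (n : nat) (cfg : config n) (u v : 'I_n) : config n :=
  let lu := size (cfg u) in
  let lv := size (cfg v) in
  if lv <= lu then
    let k := (lu - lv)./2 in
    fun i => if i == u then kept (cfg u) k
             else if i == v then cfg v ++ moved (cfg u) k
             else cfg i
  else
    let k := uphalf (lv - lu) in
    fun i => if i == v then kept (cfg v) k
             else if i == u then cfg u ++ moved (cfg v) k
             else cfg i.

Definition pair_prob (n : nat) (E : 'I_n -> 'I_n -> bool) : rat :=
  (#|[set p : 'I_n * 'I_n | (p.1 != p.2) && E p.1 p.2]|)%:R / (n * n.-1)%:R.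

(* Main.v *)
Require Import Defs.
From HB Require Import structures.
From mathcomp Require Import all_boot all_order all_algebra.
From mathcomp Require Import zify ring lra.
Import Order.TTheory GRing.Theory Num.Theory.

Lemma count_iota_sel (L K h : nat) : h <= L ->
  count (fun i => odd (L - i) && (L - i <= K)) (iota 0 h) =
  uphalf (minn K L) - uphalf (L - h).
Proof.
elim: h => [|h IH] hL.
  rewrite /= subn0; have := uphalf_leq (geq_minr K L); lia.
rewrite -addn1 iotaD count_cat IH ?(ltnW hL) //= add0n addn0.
have e1 := uphalf_half (L - h); have e2 := uphalf_half (L - h.+1).
have e3 := uphalf_half (minn K L).
case: (boolP (L - h <= K)) => hK; rewrite ?andbT ?andbF /=.
- have : L - h <= minn K L by lia.
  move=> /uphalf_leq; lia.
- have : minn K L <= L - h.+1 by lia.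
  move=> /uphalf_leq; lia.
Qed.

Lemma count_take_sel L k h : h <= L ->
  count id (take h (skip_sel L k)) = uphalf (minn k.*2 L) - uphalf (L - h).
Proof.
move=> hL; rewrite /skip_sel /mkseq -map_take take_iota count_map.
rewrite (minn_idPl hL) -count_iota_sel //.
Qed.

Lemma idx_mask (m : bitseq) (s : seq nat) b : size m = size s -> uniq s ->
  b \in mask m s -> index b (mask m s) = count id (take (index b s) m).
Proof.
move=> hs us bm.
have bs : b \in s by apply: (mem_mask bm).
set h := index b s.
have hlt : h < size s by rewrite index_mem.
have E : mask m s = mask (take h m) (take h s) ++ mask (drop h m) (drop h s).
  by rewrite -mask_cat ?cat_take_drop // !size_take hs.
have bnt : b \notin take h s.
  apply/negP=> bt.
  have : index b s < h.
    rewrite -[s](cat_take_drop h) index_cat bt.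
    by rewrite -{2}(size_takel (ltnW hlt)) index_mem.
  by rewrite ltnn.
have bnt' : b \notin mask (take h m) (take h s).
  by apply/negP => /mem_mask; apply/negP.
have D : mask (drop h m) (drop h s) =
   if nth false m h then b :: mask (drop h.+1 m) (drop h.+1 s)
   else mask (drop h.+1 m) (drop h.+1 s).
  by rewrite (drop_nth 0 hlt) (drop_nth false) ?hs //= nth_index.
have : uniq (drop h s) by apply: drop_uniq.
rewrite (drop_nth 0 hlt) nth_index //= => /andP [bn _].
move: bm; rewrite E index_cat mem_cat (negbTE bnt') /= D.
rewrite size_mask; last by rewrite !size_take hs.
case: (nth false m h) => /=; first by rewrite eqxx addn0.
by move=> /mem_mask; rewrite (negbTE bn).
Qed.

Lemma sumn_big (T : Type) (F : T -> nat) (s : seq T) :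
  sumn (map F s) = \sum_(x <- s) F x.
Proof. by elim: s => [|x s IH]; rewrite ?big_nil ?big_cons //= IH. Qed.

Lemma uniq_node n (cfg : config n) b i j :
  uniq (flatten [seq cfg i | i <- enum 'I_n]) -> b \in cfg i -> b \in cfg j -> i = j.
Proof.
move=> u bi bj; apply/eqP; apply/negPn/negP => nij.
have := count_uniq_mem b u.
rewrite count_flatten -map_comp sumn_big big_enum /=.
rewrite (bigD1 i) //= (bigD1 j) /=; last by rewrite eq_sym.
have ci : 0 < count_mem b (cfg i) by rewrite -has_count has_pred1.
have cj : 0 < count_mem b (cfg j) by rewrite -has_count has_pred1.
case: (b \in _) => /=.
all: move=> E; move: ci cj E; set x := count_mem b (cfg i); set y := count_mem b (cfg j); set z := \sum_(_ < n | _) _; lia.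
Qed.

Lemma count_negb (l : bitseq) : count (fun x : bool => x) (map negb l) = count negb l.
Proof. by elim: l => //= a l ->. Qed.

Lemma count_negb2 (l : bitseq) : count negb l + count (fun x : bool => x) l = size l.
Proof. by elim: l => //= a l <-; case: a => /=; lia. Qed.

Lemma size_skip L k : size (skip_sel L k) = L.
Proof. by rewrite /skip_sel size_mkseq. Qed.

Lemma size_kept_moved s k : size (kept s k) + size (moved s k) = size s.
Proof.
rewrite /kept /moved !size_mask ?size_map ?size_skip ?size_iota // count_negb.
by rewrite count_negb2 size_skip.
Qed.

Lemma idx_kept s k b : uniq s -> b \in kept s k ->
  index b (kept s k) = index b s -
     (uphalf (minn k.*2 (size s)) - uphalf (size s - index b s)).
Proof.
move=> us bk; rewrite /kept idx_mask ?size_map ?size_skip ?size_iota //.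
have hL : index b s <= size s by rewrite index_size.
rewrite -map_take count_negb -count_take_sel //.
have := count_negb2 (take (index b s) (skip_sel (size s) k)).
rewrite size_takel ?size_skip // => H; rewrite -{2}H; exact: (esym (addnK _ _)).
Qed.

Lemma idx_moved s k b : uniq s -> b \in moved s k ->
  index b (moved s k) =
     (uphalf (minn k.*2 (size s)) - uphalf (size s - index b s)).
Proof.
move=> us bk; rewrite /moved idx_mask ?size_map ?size_skip ?size_iota //.
by rewrite count_take_sel // index_size.
Qed.

Lemma uniq_flatten_mem (ss : seq (seq nat)) s : uniq (flatten ss) -> s \in ss -> uniq s.
Proof.
elim: ss => //= x ss IH; rewrite cat_uniq in_cons => /and3P [ux _ uss] /orP [/eqP ->|] //.
exact: IH.
Qed.

Lemma arith_gen L h lx k : lx < h -> h <= L -> L - lx <= k.*2.+1 ->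
  k.*2 <= (L - lx).+1 ->
  let S := uphalf (minn k.*2 L) - uphalf (L - h) in
  (h - S).*2 <= h + lx + 2 /\ (lx + S).*2 <= h + lx + 2.
Proof.
move=> k1 k2 k3 k4 S.
have f1 : forall y, y <= (uphalf y).*2 <= y.+1.
  by move=> y; rewrite uphalfK; case: odd => /=; lia.
have aM : L - h <= minn k.*2 L by lia.
have := uphalf_leq aM; have := f1 (minn k.*2 L); have := f1 (L - h).
have : minn k.*2 L <= k.*2 by lia.
have : L - lx <= (minn k.*2 L).+1 by lia.
rewrite /S; move: (uphalf (minn k.*2 L)) (uphalf (L - h)) (minn k.*2 L) => U1 U2 M.
lia.
Qed.

Lemma arith_kept L h lx k : lx < h -> h <= L -> L - lx <= k.*2.+1 ->
  k.*2 <= (L - lx).+1 ->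
  (h - (uphalf (minn k.*2 L) - uphalf (L - h))).*2 <= h + lx + 2.
Proof. by move=> a1 a2 a3 a4; case: (arith_gen _ _ _ _ a1 a2 a3 a4). Qed.

Lemma arith_moved L h lx k : lx < h -> h <= L -> L - lx <= k.*2.+1 ->
  k.*2 <= (L - lx).+1 ->
  (lx + (uphalf (minn k.*2 L) - uphalf (L - h))).*2 <= h + lx + 2.
Proof. by move=> a1 a2 a3 a4; case: (arith_gen _ _ _ _ a1 a2 a3 a4). Qed.

Lemma gen n (cfg cfg' : config n) w x k b :
  x != w -> uniq (flatten [seq cfg i | i <- enum 'I_n]) -> b \in cfg w ->
  (forall i, cfg' i = if i == w then kept (cfg w) k
                      else if i == x then cfg x ++ moved (cfg w) k else cfg i) ->
  size (cfg w) - size (cfg x) <= (k.*2).+1 ->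
  k.*2 <= (size (cfg w) - size (cfg x)).+1 ->
  size (cfg x) < index b (cfg w) ->
  (height cfg' b).*2 <= index b (cfg w) + size (cfg x) + 2
  /\ ntokens cfg' = ntokens cfg.
Proof.
move=> xw u bw E k1 k2 hx.
have us : uniq (cfg w).
  apply: (uniq_flatten_mem _ _ u).
  by apply: map_f; rewrite mem_enum.
have hL : index b (cfg w) <= size (cfg w) by rewrite index_size.
split.
  rewrite /height; case: pickP => [i|_]; last by lia.
  rewrite E; case: (i =P w) => [_ bi|iw].
    by rewrite idx_kept //; apply: arith_kept.
  case: (i =P x) => [_ bi|ix bi].
    have bx : b \notin cfg x.
      by apply/negP => bx; move/eqP: xw; apply; apply: uniq_node u bx bw.
    rewrite index_cat (negbTE bx) idx_moved //; last first.
      by move: bi; rewrite mem_cat (negbTE bx).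
    exact: arith_moved.
  by case: iw; apply: uniq_node u bi bw.
have sp : forall c : config n, ntokens c =
   load c w + (load c x + \sum_(i < n | (i != w) && (i != x)) load c i).
  by move=> c; rewrite /ntokens (bigD1 w) // (bigD1 x xw).
rewrite !sp.
rewrite /load !E eqxx (negbTE xw) eqxx.
rewrite (eq_bigr (fun i => size (cfg i))); last first.
  by move=> i /andP [iw ix]; rewrite E (negbTE iw) (negbTE ix).
have := size_kept_moved (cfg w) k; rewrite size_cat.
move: (\sum_(i < n | (i != w) && (i != x)) size (cfg i)) => Z; lia.
Qed.


Lemma height_at n (cfg : config n) w b :
  uniq (flatten [seq cfg i | i <- enum 'I_n]) -> b \in cfg w ->
  height cfg b = index b (cfg w).
Proof.
move=> u bw; rewrite /height; case: pickP => [i bi|/(_ w)]; last by rewrite bw.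
by rewrite (uniq_node _ _ _ _ _ u bi bw).
Qed.

Local Open Scope ring_scope.

Arguments gen {n cfg cfg' w x k b}.
Arguments height_at {n cfg w b}.
Arguments uniq_node {n cfg b i j}.

Lemma good_cfg n (cfg cfg' : config n) w x k b :
  x != w -> uniq (flatten [seq cfg i | i <- enum 'I_n]) -> b \in cfg w ->
  (forall i, cfg' i = if i == w then kept (cfg w) k
                      else if i == x then cfg x ++ moved (cfg w) k else cfg i) ->
  (size (cfg w) - size (cfg x) <= (k.*2).+1)%N ->
  (k.*2 <= (size (cfg w) - size (cfg x)).+1)%N ->
  (size (cfg x) <= round_avg cfg + 12)%N ->
  (round_avg cfg + 21 <= index b (cfg w))%N ->
  nheight cfg' b <= (17 / 20) * nheight cfg b.
Proof.
move=> xw u bw E k1 k2 sx sh.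
have hx : (size (cfg x) < index b (cfg w))%N by lia.
have [H1 H2] := gen xw u bw E k1 k2 hx.
rewrite /nheight /round_avg H2 -/(round_avg cfg) (height_at u bw).
move: H1 sx sh; set h := index b (cfg w); set r := round_avg cfg.
set lx := size (cfg x); set h' := height cfg' b => H1 sx sh.
have A1 : (h' + h' <= h + r + 14)%N by lia.
move: A1 sh; rewrite -!(ler_nat rat) !natrD => A1 A2; lra.
Qed.

Lemma step_good1 n (cfg : config n) w v b :
  v != w -> uniq (flatten [seq cfg i | i <- enum 'I_n]) -> b \in cfg w ->
  (size (cfg v) <= round_avg cfg + 12)%N ->
  (round_avg cfg + 21 <= index b (cfg w))%N ->
  nheight (step cfg w v) b <= (17 / 20) * nheight cfg b.
Proof.
move=> vw u bw sv sh.
have hL : (index b (cfg w) <= size (cfg w))%N by rewrite index_size.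
have le : (size (cfg v) <= size (cfg w))%N by lia.
apply: (good_cfg _ _ _ _ _ ((size (cfg w) - size (cfg v))./2) _ vw u bw) => //; try lia.
by move=> i; rewrite /step le.
Qed.

Lemma step_good2 n (cfg : config n) w v b :
  v != w -> uniq (flatten [seq cfg i | i <- enum 'I_n]) -> b \in cfg w ->
  (size (cfg v) <= round_avg cfg + 12)%N ->
  (round_avg cfg + 21 <= index b (cfg w))%N ->
  nheight (step cfg v w) b <= (17 / 20) * nheight cfg b.
Proof.
move=> vw u bw sv sh.
have hL : (index b (cfg w) <= size (cfg w))%N by rewrite index_size.
have le : (size (cfg w) <= size (cfg v))%N = false by apply/negbTE; rewrite -ltnNge; lia.
apply: (good_cfg _ _ _ _ _ (uphalf (size (cfg w) - size (cfg v))) _ vw u bw) => //; try lia.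
by move=> i; rewrite /step le.
Qed.

Theorem lemma3 (c : rat) (n : nat) (cfg : config n) (b : nat) :
  10 <= c ->
  (2 <= n)%N ->
  uniq (flatten [seq cfg i | i <- enum 'I_n]) ->
  b \in flatten [seq cfg i | i <- enum 'I_n] ->
  Phi cfg < n%:R ->
  2 * c < nheight cfg b ->
  n%:R^-1 <= pair_prob (fun u v => nheight (step cfg u v) b <= (17 / 20) * nheight cfg b).
Proof.
move=> c10 n2 u /flatten_mapP [w _ bw] hPhi hb.
set r := round_avg cfg.
have sh : (r + 21 <= index b (cfg w))%N.
  move: hb; rewrite /nheight (height_at u bw) -/r => hb.
  suff : (r + 20 < index b (cfg w))%N by lia.
  rewrite -(ltr_nat rat) natrD; lra.
have hL : (index b (cfg w) <= size (cfg w))%N by rewrite index_size.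
have n0 : (0 < n)%N by lia.
have avgr : avg cfg < r%:R + 1 / 2.
  have n2' : (0 < n.*2)%N by lia.
  have H : ((ntokens cfg).*2 + n < r.+1 * n.*2)%N by apply: ltn_ceil.
  have H' : (ntokens cfg + ntokens cfg + n < (r * n + n) * 2)%N by nia.
  move: H'; rewrite -(ltr_nat rat) !natrD !natrM => H'.
  rewrite /avg ltr_pdivrMr ?ltr0n //; nra.
set B := [set i : 'I_n | (r + 13 <= load cfg i)%N].
have PB : (144 * #|B|)%:R <= Phi cfg.
  apply: le_trans (_ : \sum_(i < n) (if i \in B then 144 else 0) <= _).
    by rewrite -big_mkcond /= sumr_const natrM mulr_natr.
  apply: ler_sum => i _; case: ifP => iB; last exact: sqr_ge0.
  move: iB; rewrite inE -(ler_nat rat) natrD => iB.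
  rewrite expr2; nra.
have hB : (144 * #|B| < n)%N by rewrite -(ltr_nat rat); exact: le_lt_trans PB hPhi.
have wB : w \in B by rewrite inE /load; lia.
set G := ~: B.
have cG : (#|B| + #|G|)%N = n by rewrite cardsC card_ord.
have wG : w \notin G by rewrite inE wB.
have vGs : forall v, ~~ (r + 13 <= load cfg v)%N -> (size (cfg v) <= r + 12)%N /\ v != w.
  move=> v vG; split; first by move: vG; rewrite /load -ltnNge; lia.
  by apply/eqP => vw; move: vG wB; rewrite vw inE => /negbTE ->.
rewrite /pair_prob.
set P := [set p : 'I_n * 'I_n | _].
have sub : setX [set w] G :|: setX G [set w] \subset P.
  apply/subsetP => [[p1 p2]]; rewrite !inE /=.
  case/orP => [/andP [/eqP -> vG] | /andP [vG /eqP ->]].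
    have [sv vw] := vGs _ vG.
    by rewrite eq_sym vw /=; apply: step_good1.
  have [sv vw] := vGs _ vG.
  by rewrite vw /=; apply: step_good2.
have cU : #|setX [set w] G :|: setX G [set w]| = (#|G| + #|G|)%N.
  have := cardsUI (setX [set w] G) (setX G [set w]).
  rewrite !cardsX cards1 mul1n muln1.
  have -> : setX [set w] G :&: setX G [set w] = set0.
    apply/setP => [[p1 p2]]; rewrite !inE /=.
    apply/negP => /andP [/andP [/eqP e1 _] /andP [p1G _]].
    by move: p1G wB; rewrite e1 inE => /negbTE ->.
  by rewrite cards0 addn0.
have cP : (#|G| + #|G| <= #|P|)%N by rewrite -cU subset_leq_card.
rewrite ler_pdivlMr; last by rewrite ltr0n muln_gt0; apply/andP; split; lia.
rewrite natrM mulrA mulVf ?mul1r ?ler_nat; first lia.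
by rewrite pnatr_eq0; lia.
Qed.
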